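(* In the setting of the context, for every $g_0\in F_{xz}$ and $g_1\in F_{yz}$ we have $|g_1^{-1}g_0|_{S_1}\ge f(|g_0|_{S_1})$.
   Context: $H$ is a finitely presented group with finite generating set $T$, containing a free subgroup $F$ of rank $p$ with free basis $R=\{d_1,\dots,d_p\}\subset T$ (standing assumption: $\mathrm{Dist}_F^H$ admits an exponentially bounded sequence of palindromic certificates in $F$). $F_x,F_y,F_z$ are free of rank $p$ with bases $R_x=\{x_i\},R_y=\{y_i\},R_z=\{z_i\}$. $G_1=[H\ast_{\langle d_i=x_iy_i^{-1}\rangle}(F_x\times F_y\times F_z)]\times\langle s_1\rangle$; $a_i=x_iz_i$, $b_i=y_iz_i$, $R_{xz}=\{a_i\}$, $R_{yz}=\{b_i\}$, $F_{xz}=\langle R_{xz}\rangle$, $F_{yz}=\langle R_{yz}\rangle$; $S_1=T\cup R_x\cup R_y\cup R_z\cup R_{xz}\cup R_{yz}\cup\{s_1\}$. $\mathrm{Dist}_F^H(n)=\max\{|g|_R:g\in F,|g|_T\le n\}$ (linearly interpolated). $f=\Delta^{-1}$, where $\Delta:[0,\infty)\to[0,\infty)$ is a non-decreasing bijection Lipschitz equivalent to $\mathrm{Dist}_F^H$ with $\Delta(r)\ge r$ for $r\ge1$ and $f(|g|_R)\le|g|_T$ for every $g\in F$ (Lipschitz equivalence: $\exists M\ge1$ with $g(r)\le Mf(Mr)$, $f(r)\le Mg(Mr)$ for $r\ge1$). *)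

(* Defs.v *)
From Stdlib Require Import Reals Lra Lia List.
Open Scope R_scope.

Record Grp := {
  car :> Type;
  gmul : car -> car -> car;
  ginv : car -> car;
  gone : car;
  gmulA : forall a b c, gmul a (gmul b c) = gmul (gmul a b) c;
  gmul1l : forall a, gmul gone a = a;
  gmulVl : forall a, gmul (ginv a) a = gone
}.
Arguments gmul {g} _ _.
Arguments ginv {g} _.
Arguments gone {g}.

Record Hom (G L : Grp) := {
  hfun :> G -> L;
  hmul : forall a b, hfun (gmul a b) = gmul (hfun a) (hfun b)
}.

(* A word is a list of letters (u, b): u a generator, b = true for u,
   b = false for u^{-1}. *)
Definition letter_val {G : Grp} (l : G * bool) : G :=
  if snd l then fst l else ginv (fst l).

Definition word_eval {G : Grp} (w : list (G * bool)) : G :=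
  fold_right (fun l acc => gmul (letter_val l) acc) gone w.

Definition word_reach {G : Grp} (S : G -> Prop) (g : G) (n : nat) : Prop :=
  exists w : list (G * bool),
    length w = n /\ Forall (fun l => S (fst l)) w /\ word_eval w = g.

Definition word_len {G : Grp} (S : G -> Prop) (g : G) (n : nat) : Prop :=
  word_reach S g n /\ forall m, word_reach S g m -> (n <= m)%nat.

Definition word_len_le {G : Grp} (S : G -> Prop) (g : G) (n : nat) : Prop :=
  exists m, (m <= n)%nat /\ word_reach S g m.

Definition in_gen {G : Grp} (S : G -> Prop) (g : G) : Prop :=
  exists n, word_reach S g n.

Definition generates {G : Grp} (S : G -> Prop) : Prop :=
  forall g : G, in_gen S g.

Definition finite_set {G : Grp} (S : G -> Prop) : Prop :=
  exists l : list G, forall u, S u <-> In u l.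

(* H is finitely presented on the finite generating set T: there is a finite
   list of relators (words in T) such that every map of T into a group L
   killing the relators extends to a homomorphism H -> L. *)
Definition fin_presented (H : Grp) (T : H -> Prop) : Prop :=
  finite_set T /\ generates T /\
  exists rels : list (list (H * bool)),
    Forall (fun w => Forall (fun l => T (fst l)) w /\ word_eval w = gone) rels /\
    forall (L : Grp) (phi : H -> L),
      Forall (fun w => word_eval (map (fun l => (phi (fst l), snd l)) w) = gone) rels ->
      exists psi : Hom H L, forall t, T t -> psi t = phi t.

Definition idx_eval {G : Grp} (d : nat -> G) (w : list (nat * bool)) : G :=
  word_eval (map (fun l => (d (fst l), snd l)) w).

Fixpoint reduced (w : list (nat * bool)) : Prop :=
  match w with
  | nil => True
  | (i, b) :: w' =>
      match w' with
      | nil => True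
      | (j, c) :: _ => ~ (i = j /\ b <> c) /\ reduced w'
      end
  end.

Definition free_family {G : Grp} (p : nat) (d : nat -> G) : Prop :=
  forall w : list (nat * bool),
    Forall (fun l => (fst l < p)%nat) w -> reduced w -> idx_eval d w = gone ->
    w = nil.

Definition set_of_family {G : Grp} (p : nat) (d : nat -> G) : G -> Prop :=
  fun u => exists i, (i < p)%nat /\ u = d i.

(* G1 together with iota : H -> G1, x_i, y_i, z_i, s1 is
   [H *_{d_i = x_i y_i^{-1}} (F_x x F_y x F_z)] x <s1>, characterised by its
   presentation / universal property:
   generators H, x_i, y_i, z_i, s1; relations those of H,
   d_i = x_i y_i^{-1}, [x_i,y_j] = [x_i,z_j] = [y_i,z_j] = 1,
   s1 central. *)
Definition G1_relations {H L : Grp} (p : nat) (d : nat -> H) (phi : H -> L)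
    (X Y Z : nat -> L) (s : L) : Prop :=
  (forall i, (i < p)%nat -> phi (d i) = gmul (X i) (ginv (Y i))) /\
  (forall i j, (i < p)%nat -> (j < p)%nat ->
     gmul (X i) (Y j) = gmul (Y j) (X i) /\
     gmul (X i) (Z j) = gmul (Z j) (X i) /\
     gmul (Y i) (Z j) = gmul (Z j) (Y i)) /\
  (forall h : H, gmul s (phi h) = gmul (phi h) s) /\
  (forall i, (i < p)%nat ->
     gmul s (X i) = gmul (X i) s /\ gmul s (Y i) = gmul (Y i) s /\
     gmul s (Z i) = gmul (Z i) s).

Definition is_G1 (H : Grp) (p : nat) (d : nat -> H) (G1 : Grp) (iota : Hom H G1)
    (X Y Z : nat -> G1) (s1 : G1) : Prop :=
  G1_relations p d iota X Y Z s1 /\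
  forall (L : Grp) (phi : Hom H L) (X' Y' Z' : nat -> L) (s' : L),
    G1_relations p d phi X' Y' Z' s' ->
    (exists psi : Hom G1 L,
        (forall h, psi (iota h) = phi h) /\
        (forall i, (i < p)%nat -> psi (X i) = X' i /\ psi (Y i) = Y' i /\
                                  psi (Z i) = Z' i) /\
        psi s1 = s') /\
    (forall psi1 psi2 : Hom G1 L,
        (forall h, psi1 (iota h) = phi h) ->
        (forall i, (i < p)%nat -> psi1 (X i) = X' i /\ psi1 (Y i) = Y' i /\
                                  psi1 (Z i) = Z' i) ->
        psi1 s1 = s' ->
        (forall h, psi2 (iota h) = phi h) ->
        (forall i, (i < p)%nat -> psi2 (X i) = X' i /\ psi2 (Y i) = Y' i /\
                                  psi2 (Z i) = Z' i) ->
        psi2 s1 = s' ->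
        forall g, psi1 g = psi2 g).

Definition S1_set {H G1 : Grp} (T : H -> Prop) (p : nat) (iota : H -> G1)
    (X Y Z : nat -> G1) (s1 : G1) : G1 -> Prop :=
  fun u =>
    (exists t, T t /\ u = iota t) \/
    (exists i, (i < p)%nat /\
       (u = X i \/ u = Y i \/ u = Z i \/ u = gmul (X i) (Z i) \/
        u = gmul (Y i) (Z i))) \/
    u = s1.

Definition is_dist {H : Grp} (T R : H -> Prop) (D : nat -> nat) : Prop :=
  forall n : nat,
    (exists g, in_gen R g /\ word_len_le T g n /\ word_len R g (D n)) /\
    (forall g k, in_gen R g -> word_len_le T g n -> word_len R g k -> (k <= D n)%nat).

Definition interp (D : nat -> nat) (r : R) : R :=
  let k := Z.to_nat (Int_part r) in
  INR (D k) + (r - INR k) * (INR (D (S k)) - INR (D k)).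

Definition lip_equiv (g f : R -> R) : Prop :=
  exists M : R, 1 <= M /\
    forall r, 1 <= r -> g r <= M * f (M * r) /\ f r <= M * g (M * r).

(* Main.v *)
Require Import Defs.
From Stdlib Require Import Reals List Lra Lia Classical.
Open Scope R_scope.

Section GrpLemmas.
Variable G : Grp.
Implicit Types a b c : G.

Lemma mulrV a : gmul a (ginv a) = gone.
Proof.
  rewrite <- (gmul1l G (gmul a (ginv a))).
  rewrite <- (gmulVl G (ginv a)) at 1.
  rewrite <- gmulA. rewrite (gmulA G (ginv a) a (ginv a)).
  rewrite gmulVl, gmul1l. apply gmulVl.
Qed.

Lemma mulr1 a : gmul a gone = a.
Proof.
  rewrite <- (gmulVl G a). rewrite gmulA, mulrV. apply gmul1l.
Qed.

Lemma inv_uniq a b : gmul a b = gone -> a = ginv b.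
Proof.
  intro Hab. rewrite <- (mulr1 a). rewrite <- (mulrV b).
  rewrite gmulA, Hab. apply gmul1l.
Qed.

Lemma inv1 : ginv (@gone G) = gone.
Proof. symmetry. apply inv_uniq. apply gmul1l. Qed.

Lemma invK a : ginv (ginv a) = a.
Proof. symmetry. apply inv_uniq. apply mulrV. Qed.

Lemma invM a b : ginv (gmul a b) = gmul (ginv b) (ginv a).
Proof.
  symmetry. apply inv_uniq.
  rewrite <- gmulA. rewrite (gmulA G (ginv a) a b). rewrite gmulVl, gmul1l.
  apply gmulVl.
Qed.

Lemma mul_cancel_l a b c : gmul a b = gmul a c -> b = c.
Proof.
  intro E. rewrite <- (gmul1l G b), <- (gmul1l G c).
  rewrite <- (gmulVl G a). rewrite <- !gmulA. rewrite E. reflexivity.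
Qed.
End GrpLemmas.

Lemma hom_one {G L : Grp} (psi : Hom G L) : psi gone = gone.
Proof.
  apply (mul_cancel_l L (psi gone)). rewrite <- hmul, gmul1l, mulr1. reflexivity.
Qed.

Lemma hom_inv {G L : Grp} (psi : Hom G L) x : psi (ginv x) = ginv (psi x).
Proof.
  apply inv_uniq. rewrite <- hmul, gmulVl. apply hom_one.
Qed.

Lemma hom_lv {G L : Grp} (psi : Hom G L) u (b : bool) :
  psi (letter_val (u, b)) = letter_val (psi u, b).
Proof. destruct b; simpl; [reflexivity| apply hom_inv]. Qed.

Lemma idx_eval_cons {G : Grp} (c : nat -> G) l w :
  idx_eval c (l :: w) = gmul (letter_val (c (fst l), snd l)) (idx_eval c w).
Proof. reflexivity. Qed.

Lemma idx_eval_hom {G L : Grp} (psi : Hom G L) (c : nat -> G) w :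
  psi (idx_eval c w) = idx_eval (fun i => psi (c i)) w.
Proof.
  induction w as [|[i b] w IH].
  - apply hom_one.
  - rewrite !idx_eval_cons, hmul, IH. simpl. rewrite hom_lv. reflexivity.
Qed.

Lemma idx_eval_ext {G : Grp} p (c c' : nat -> G) w :
  Forall (fun l => (fst l < p)%nat) w -> (forall i, (i < p)%nat -> c i = c' i) ->
  idx_eval c w = idx_eval c' w.
Proof.
  intros HF Hc. induction HF as [|[i b] w Hi HF IH]; [reflexivity|].
  rewrite !idx_eval_cons, IH. simpl in *. rewrite Hc by exact Hi. reflexivity.
Qed.

Lemma idx_eval_one {G : Grp} w : idx_eval (fun _ => @gone G) w = gone.
Proof.
  induction w as [|[i b] w IH]; [reflexivity|].
  rewrite idx_eval_cons, IH. unfold letter_val; destruct b; simpl; rewrite ?inv1; apply gmul1l.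
Qed.

Lemma idx_eval_app {G : Grp} (c : nat -> G) u v :
  idx_eval c (u ++ v) = gmul (idx_eval c u) (idx_eval c v).
Proof.
  induction u as [|l u IH]; simpl app.
  - simpl. rewrite gmul1l. reflexivity.
  - rewrite !idx_eval_cons, IH. apply gmulA.
Qed.

Definition inv_word (w : list (nat * bool)) :=
  rev (map (fun l => (fst l, negb (snd l))) w).

Lemma idx_eval_inv {G : Grp} (c : nat -> G) w :
  idx_eval c (inv_word w) = ginv (idx_eval c w).
Proof.
  induction w as [|[i b] w IH].
  - simpl. rewrite inv1. reflexivity.
  - unfold inv_word in *. simpl map. simpl rev. rewrite idx_eval_app, IH.
    rewrite (idx_eval_cons c (i, b) w), invM, idx_eval_cons.
    change (idx_eval c nil) with (@gone G). rewrite mulr1. f_equal.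
    unfold letter_val; destruct b; simpl; rewrite ?invK; reflexivity.
Qed.

Lemma Forall_inv_word (P : nat -> Prop) w :
  Forall (fun l => P (fst l)) w -> Forall (fun l => P (fst l)) (inv_word w).
Proof.
  intro H. unfold inv_word. apply Forall_rev.
  induction H; simpl; constructor; auto.
Qed.

Definition cancels (l l' : nat * bool) : bool :=
  Nat.eqb (fst l) (fst l') && negb (Bool.eqb (snd l) (snd l')).

Fixpoint red (w : list (nat * bool)) : list (nat * bool) :=
  match w with
  | nil => nil
  | l :: w' =>
      match red w' with
      | nil => l :: nil
      | l' :: r => if cancels l l' then r else l :: l' :: r
      end
  end.

Lemma reduced_tail x r : reduced (x :: r) -> reduced r.
Proof.
  destruct x as [i b]. destruct r as [|[j c] r]; simpl; [auto| tauto].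
Qed.

Lemma red_reduced w : reduced (red w).
Proof.
  induction w as [|l w IH]; simpl; [exact I|].
  destruct (red w) as [|l' r] eqn:E.
  - destruct l; exact I.
  - destruct (cancels l l') eqn:C.
    + eapply reduced_tail; eauto.
    + destruct l as [i b], l' as [j c]. simpl. split; [|exact IH].
      intros [-> Hbc]. unfold cancels in C. simpl in C.
      rewrite Nat.eqb_refl in C. destruct b, c; simpl in *; congruence.
Qed.

Lemma red_Forall (P : nat * bool -> Prop) w : Forall P w -> Forall P (red w).
Proof.
  induction 1 as [|l w Hl HF IH]; simpl; [constructor|].
  destruct (red w) as [|l' r]; [constructor; auto|].
  inversion IH; subst. destruct (cancels l l'); auto.
Qed.

Lemma red_eval {G : Grp} (c : nat -> G) w : idx_eval c (red w) = idx_eval c w.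
Proof.
  induction w as [|l w IH]; simpl red; [reflexivity|].
  rewrite idx_eval_cons, <- IH.
  destruct (red w) as [|l' r]; [reflexivity|].
  destruct (cancels l l') eqn:C; [|reflexivity].
  rewrite idx_eval_cons, gmulA.
  destruct l as [i b], l' as [j c']. unfold cancels in C; simpl in C.
  apply andb_prop in C. destruct C as [C1 C2]. apply Nat.eqb_eq in C1. subst j.
  unfold letter_val; destruct b, c'; simpl in C2 |- *; try discriminate.
  - rewrite mulrV, gmul1l. reflexivity.
  - rewrite gmulVl, gmul1l. reflexivity.
Qed.

Lemma to_idx {G : Grp} p (c : nat -> G) w :
  Forall (fun l => set_of_family p c (fst l)) w ->
  exists wi, Forall (fun l => (fst l < p)%nat) wi /\ length wi = length w /\
             word_eval w = idx_eval c wi.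
Proof.
  induction 1 as [|[u b] w Hl HF IH].
  - exists nil. repeat split; constructor.
  - destruct IH as [wi [H1 [H2 H3]]]. destruct Hl as [i [Hi Hu]]. simpl in Hu.
    exists ((i, b) :: wi). repeat split.
    + constructor; auto.
    + simpl. congruence.
    + simpl. rewrite H3, Hu. reflexivity.
Qed.

Lemma idx_to_word {G : Grp} p (c : nat -> G) (S : G -> Prop) wi :
  Forall (fun l => (fst l < p)%nat) wi -> (forall i, (i < p)%nat -> S (c i)) ->
  word_reach S (idx_eval c wi) (length wi).
Proof.
  intros HF HS. exists (map (fun l => (c (fst l), snd l)) wi).
  split; [apply length_map|]. split; [|reflexivity].
  induction HF as [|x l Hx HF IH]; simpl; constructor; [apply HS; exact Hx| exact IH].
Qed.

Lemma push_word {G L : Grp} (psi : Hom G L) (S : G -> Prop) (T : L -> Prop) w :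
  (forall u, S u -> T (psi u) \/ psi u = gone) -> Forall (fun l => S (fst l)) w ->
  exists m, (m <= length w)%nat /\ word_reach T (psi (word_eval w)) m.
Proof.
  intros HST HF. induction HF as [|[u b] w Hl HF IH].
  - exists 0%nat. split; [lia|]. exists nil. simpl. repeat split; [constructor|].
    symmetry. apply hom_one.
  - destruct IH as [m [Hm [w' [Hw1 [Hw2 Hw3]]]]].
    simpl word_eval. rewrite hmul. simpl in Hl.
    destruct (HST u Hl) as [HT|H1].
    + exists (Datatypes.S m). split; [simpl; lia|]. exists ((psi u, b) :: w').
      split; [simpl; congruence|]. split; [constructor; auto|].
      simpl. rewrite Hw3. f_equal. symmetry. apply (hom_lv psi u b).
    + exists m. split; [simpl; lia|]. rewrite (hom_lv psi u b), H1.
      replace (letter_val (@gone L, b)) with (@gone L)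
        by (unfold letter_val; destruct b; simpl; rewrite ?inv1; reflexivity).
      rewrite gmul1l. exists w'. auto.
Qed.

Lemma min_exists (P : nat -> Prop) n : P n -> exists k, P k /\ forall m, P m -> (k <= m)%nat.
Proof.
  revert n. induction n as [n IH] using (well_founded_induction Wf_nat.lt_wf).
  intro Pn. destruct (classic (exists m, P m /\ (m < n)%nat)) as [[m [Pm Hm]]|Hno].
  - exact (IH m Hm Pm).
  - exists n. split; auto. intros m Pm. destruct (Nat.le_gt_cases n m); auto.
    exfalso. apply Hno. eauto.
Qed.

Theorem lemma3p7
  (* H finitely presented, finite generating set T *)
  (H : Grp) (T : H -> Prop) (HfpT : fin_presented H T)
  (* free subgroup F of rank p with free basis R = {d_1..d_p} ⊂ T *)
  (p : nat) (d : nat -> H)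
  (HdT : forall i, (i < p)%nat -> T (d i))
  (Hfree : free_family p d)
  (* Dist_F^H and its linear interpolation *)
  (D : nat -> nat) (HD : is_dist T (set_of_family p d) D)
  (* Delta, f = Delta^{-1} *)
  (Delta f : R -> R)
  (HDmono : forall r s, 0 <= r -> r <= s -> Delta r <= Delta s)
  (HDpos : forall r, 0 <= r -> 0 <= Delta r)
  (Hfpos : forall y, 0 <= y -> 0 <= f y)
  (HfD : forall r, 0 <= r -> f (Delta r) = r)
  (HDf : forall y, 0 <= y -> Delta (f y) = y)
  (HDlip : lip_equiv Delta (interp D))
  (HDge : forall r, 1 <= r -> r <= Delta r)
  (HfRT : forall (g : H) (k n : nat), in_gen (set_of_family p d) g ->
            word_len (set_of_family p d) g k -> word_len T g n ->
            f (INR k) <= INR n)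
  (* the group G_1 *)
  (G1 : Grp) (iota : Hom H G1) (X Y Z : nat -> G1) (s1 : G1)
  (HG1 : is_G1 H p d G1 iota X Y Z s1) :
  let a := fun i => gmul (X i) (Z i) in
  let b := fun i => gmul (Y i) (Z i) in
  let S1 := S1_set T p iota X Y Z s1 in
  forall (g0 g1 : G1),
    in_gen (set_of_family p a) g0 ->
    in_gen (set_of_family p b) g1 ->
    forall n0 n : nat,
      word_len S1 g0 n0 ->
      word_len S1 (gmul (ginv g1) g0) n ->
      INR n >= f (INR n0).
Proof.
  intros a b S1 g0 g1 [l0 [w0 [_ [Hw0F Hw0E]]]] [l1 [w1 [_ [Hw1F Hw1E]]]]
    n0 n [_ Hn0min] [[z [Hzl [HzF HzE]]] _].
  assert (fmono : forall y1 y2, 0 <= y1 -> y1 <= y2 -> f y1 <= f y2).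
  { intros y1 y2 H1 H2. destruct (Rle_dec (f y1) (f y2)) as [|Hn]; auto.
    exfalso. assert (Hle : Delta (f y2) <= Delta (f y1))
      by (apply HDmono; [apply Hfpos; lra| lra]).
    rewrite !HDf in Hle by lra. assert (y1 = y2) by lra. subst. lra. }
  (* the retraction psi : G1 -> H *)
  destruct HG1 as [_ Huniv].
  set (idH := {| hfun := fun h : H => h; hmul := fun _ _ => eq_refl |} : Hom H H).
  destruct (Huniv H idH d (fun _ => gone) (fun _ => gone) gone) as [[psi [Hpi [HpXYZ Hps]]] _].
  { unfold G1_relations. simpl. repeat split; intros;
      rewrite ?inv1, ?mulr1, ?gmul1l; reflexivity. }
  simpl in Hpi.
  assert (Hpa : forall i, (i < p)%nat -> psi (a i) = d i).
  { intros i Hi. unfold a. rewrite hmul. destruct (HpXYZ i Hi) as [-> [_ ->]].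
    apply mulr1. }
  assert (Hpb : forall i, (i < p)%nat -> psi (b i) = gone).
  { intros i Hi. unfold b. rewrite hmul. destruct (HpXYZ i Hi) as [_ [-> ->]].
    apply gmul1l. }
  destruct (to_idx p a w0 Hw0F) as [wi [HwiF [_ Hwi]]].
  destruct (to_idx p b w1 Hw1F) as [vi1 [Hvi1F [_ Hvi1]]].
  set (h := idx_eval d wi).
  assert (Hph : psi (gmul (ginv g1) g0) = h).
  { rewrite hmul, hom_inv. rewrite <- Hw0E, <- Hw1E, Hwi, Hvi1, !idx_eval_hom.
    rewrite (idx_eval_ext p _ (fun _ => gone) vi1 Hvi1F Hpb), idx_eval_one, inv1,
      gmul1l.
    apply idx_eval_ext with p; auto. }
  assert (HhR : word_reach (set_of_family p d) h (length wi)).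
  { apply idx_to_word with p; auto. intros i Hi. exists i; auto. }
  destruct (min_exists _ _ HhR) as [k [[v [Hvl [HvF HvE]]] Hkmin]].
  destruct (to_idx p d v HvF) as [vi [HviF [Hvil Hvi]]].
  assert (Hg0 : g0 = idx_eval a vi).
  { set (u := wi ++ inv_word vi).
    assert (HuF : Forall (fun l => (fst l < p)%nat) u).
    { apply Forall_app. split; auto.
      apply (Forall_inv_word (fun i => (i < p)%nat)). auto. }
    assert (Hred : red u = nil).
    { apply Hfree; [apply red_Forall; auto| apply red_reduced|].
      rewrite red_eval. unfold u. rewrite idx_eval_app, idx_eval_inv, <- Hvi, HvE.
      apply mulrV. }
    assert (Hua : idx_eval a u = gone) by (rewrite <- red_eval, Hred; reflexivity).
    unfold u in Hua. rewrite idx_eval_app, idx_eval_inv in Hua.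
    rewrite <- Hw0E, Hwi. rewrite <- (invK G1 (idx_eval a vi)). apply inv_uniq. exact Hua. }
  assert (Hn0k : (n0 <= k)%nat).
  { apply Hn0min. rewrite Hg0, <- Hvl, <- Hvil. apply idx_to_word with p; auto.
    intros i Hi. right. left. exists i. split; auto. }
  destruct (push_word psi S1 T z) as [m [Hm HmT]]; auto.
  { intros u [[t [Ht ->]]|[[i [Hi Hu]]| ->]].
    - left. rewrite Hpi. exact Ht.
    - destruct (HpXYZ i Hi) as [HX [HY HZ]].
      destruct Hu as [->|[->|[->|[->| ->]]]].
      + left. rewrite HX. auto.
      + right. auto.
      + right. auto.
      + left. rewrite hmul, HX, HZ, mulr1. auto.
      + right. rewrite hmul, HY, HZ. apply gmul1l.
    - right. exact Hps. }
  rewrite HzE, Hph in HmT.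
  destruct (min_exists _ _ HmT) as [n' [Hn'r Hn'min]].
  assert (Hfk : f (INR k) <= INR n').
  { apply HfRT with h.
    - exists (length wi). exact HhR.
    - split; [exists v; auto| exact Hkmin].
    - split; auto. }
  assert (INR n' <= INR n) by (apply le_INR; specialize (Hn'min m HmT); lia).
  assert (f (INR n0) <= f (INR k)) by (apply fmono; [apply pos_INR| apply le_INR; auto]).
  lra.
Qed.
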